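(* Let $\mathcal{G}$ be a directed graph and $k\neq j$ nodes such that the connection subgraph $\mathcal{C}_\mathcal{G}(k,j)$ is a directed tree with unit weight on every edge. Let $n$ be the length of a shortest directed path from $k$ to a node reachable from both $k$ and $j$, and $m$ the length of a shortest directed path from $j$ to a node reachable from both $k$ and $j$. Then $$r_{k,j}=2(n-m)+2^{3-n-m}\sum_{i=1}^{\lfloor (m+1)/2\rfloor} i\binom{n+m+2}{n+2i+1}.$$
   Context: A (weighted directed) graph has nonnegative adjacency matrix $A=[a_{i,j}]$ with $a_{i,j}>0$ iff there is an edge from $i$ to $j$ (weight $a_{i,j}$). Out-degree $d_k=\sum_j a_{k,j}$, $D=\mathrm{diag}(d_k)$, Laplacian $L=D-A$. A node is reachable from another if there is a directed path (possibly of length $0$) from the latter to the former. A graph is connected if it contains a node reachable from every node. For a connected graph on $N$ nodes: $\Pi=I_N-\frac1N\mathbf{1}_N\mathbf{1}_N^T$, $Q\in\mathbb{R}^{(N-1)\times N}$ with $Q\mathbf{1}_N=0$, $QQ^T=I_{N-1}$, $Q^TQ=\Pi$; $\overline L=QLQ^T$; $\Sigma$ the unique solution of $\overline L\Sigma+\Sigma\overline L^T=I_{N-1}$; $X=2Q^T\Sigma Q$; $r_{k,j}=x_{k,k}+x_{j,j}-2x_{k,j}$. A connection between $k$ and $j$ consists of two directed paths, one starting at $k$ and one at $j$, ending at a common node (one may be trivial). The connection subgraph $\mathcal{C}_\mathcal{G}(k,j)$ is a maximal connected subgraph of $\mathcal{G}$ in which every node and edge is part of a connection between $k$ and $j$;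 when unique, $r_{k,j}$ in $\mathcal{G}$ is by definition the effective resistance between $k$ and $j$ computed in $\mathcal{C}_\mathcal{G}(k,j)$. A directed tree is a graph whose underlying undirected graph is a tree and in which all edges are directed towards a single root (every non-root node has exactly one outgoing edge). Binomial coefficients are $\binom{a}{b}=\frac{a!}{b!(a-b)!}$ for $0\le b\le a$, and an empty sum is $0$. *)

(* Defs.v *)
(* Real numbers are modelled by an arbitrary real closed field. *)
From HB Require Import structures.
From mathcomp Require Import all_boot all_order all_algebra.
From Stdlib Require Import ClassicalEpsilon.
Set Implicit Arguments. Unset Strict Implicit. Unset Printing Implicit Defensive.
Import Order.TTheory GRing.Theory Num.Theory.
Local Open Scope ring_scope.

Definition pb (P : Prop) : bool :=
  if excluded_middle_informative P then true else false.

Section Graphs.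
Variables (R : rcfType) (N : nat).

Definition edge (A : 'M[R]_N) : rel 'I_N := fun a b => 0 < A a b.

Definition laplacian p (A : 'M[R]_p) : 'M[R]_p :=
  diag_mx (\row_i \sum_l A i l) - A.

(* r is the quantity r_{k,j} defined via the Lyapunov equation, for every
   admissible Q and the (unique) solution Sigma *)
Definition resistance_is p (A : 'M[R]_p) (k j : 'I_p) (r : R) : Prop :=
  forall (Q : 'M[R]_(p.-1, p)) (Sig : 'M[R]_(p.-1)),
    Q *m (const_mx 1 : 'cV[R]_p) = 0 ->
    Q *m Q^T = 1%:M ->
    Q^T *m Q = 1%:M - (p%:R)^-1 *: (const_mx 1 : 'M[R]_p) ->
    (Q *m laplacian A *m Q^T) *m Sig + Sig *m (Q *m laplacian A *m Q^T)^T
      = 1%:M ->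
    let X := 2 *: (Q^T *m Sig *m Q) in
    r = X k k + X j j - 2 * X k j.

Definition is_connection (A : 'M[R]_N) (k j : 'I_N) (p1 p2 : seq 'I_N) : bool :=
  [&& path (edge A) k p1, path (edge A) j p2, uniq (k :: p1), uniq (j :: p2)
    & last k p1 == last j p2].

Definition conn_node (A : 'M[R]_N) (k j v : 'I_N) : Prop :=
  exists p1 p2, is_connection A k j p1 p2 && ((v \in k :: p1) || (v \in j :: p2)).

Definition conn_edge (A : 'M[R]_N) (k j a b : 'I_N) : Prop :=
  exists p1 p2, is_connection A k j p1 p2 &&
    (((a, b) \in zip (k :: p1) p1) || ((a, b) \in zip (j :: p2) p2)).

Definition conn_nodes (A : 'M[R]_N) (k j : 'I_N) : {set 'I_N} :=
  [set v | pb (conn_node A k j v)].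
Definition conn_rel (A : 'M[R]_N) (k j : 'I_N) : rel 'I_N :=
  fun a b => pb (conn_edge A k j a b).

Definition subadj (A : 'M[R]_N) (S : {set 'I_N}) (E : rel 'I_N) : 'M[R]_#|S| :=
  \matrix_(a, b) if E (enum_val a) (enum_val b)
                 then A (enum_val a) (enum_val b) else 0.

Definition directed_tree (S : {set 'I_N}) (E : rel 'I_N) : Prop :=
  (forall a b, E a b -> (a \in S) && (b \in S)) /\
  exists2 r, r \in S &
    [/\ #|[set b | E r b]| = 0%N,
        forall v, v \in S -> v != r -> #|[set b | E v b]| = 1%N
      & forall v, v \in S -> connect E v r].

Definition common_reach (A : 'M[R]_N) (k j w : 'I_N) : bool :=
  connect (edge A) k w && connect (edge A) j w.

Definition shortest_to_common (A : 'M[R]_N) (k j src : 'I_N) (d : nat) : Prop :=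
  (exists p, [&& path (edge A) src p, common_reach A k j (last src p)
               & size p == d]) /\
  (forall p, path (edge A) src p -> common_reach A k j (last src p) ->
     (d <= size p)%N).

End Graphs.

Definition resistance_formula (R : rcfType) (n m : nat) : R :=
  2 * (n%:R - m%:R) +
  (2 : R) ^ (3 - (n : int) - (m : int)) *
  \sum_(1 <= i < (m.+1)./2.+1) (i * 'C(n + m + 2, n + 2 * i + 1))%:R.

(* Main.v *)
Require Import Defs.
From HB Require Import structures.
From mathcomp Require Import all_boot all_order all_algebra.
From mathcomp Require Import zify ring lra.
From Stdlib Require Import ClassicalEpsilon.
Set Implicit Arguments. Unset Strict Implicit. Unset Printing Implicit Defensive.
Import Order.TTheory GRing.Theory Num.Theory.

Module Part1.

Lemma sum_widen (lo K1 K2 : nat) (g : nat -> nat) :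
  (K1 <= K2)%N -> (forall i, (K1 <= i)%N -> g i = 0%N) ->
  \sum_(lo <= i < K1) g i = \sum_(lo <= i < K2) g i.
Proof.
move=> le12 g0; case: (leqP lo K1) => hlo.
  rewrite (@big_cat_nat _ _ _ K1 lo K2) //= [X in _ = _ + X]big1_seq ?addn0 //.
  by move=> i /andP[_]; rewrite mem_index_iota => /andP[/g0].
rewrite big_geq ?(ltnW hlo) //; rewrite big1_seq // => i /andP[_].
by rewrite mem_index_iota => /andP[hi _]; apply: g0; rewrite (leq_trans (ltnW hlo)).
Qed.

Definition Od M K := \sum_(0 <= i < K) 'C(M, i.*2.+1).
Definition Ev M K := \sum_(0 <= i < K) 'C(M, i.*2).
Definition Oi M K := \sum_(0 <= i < K) i * 'C(M, i.*2.+1).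
Definition Ei M K := \sum_(0 <= i < K) i * 'C(M, i.*2).

Lemma widen (M K1 K2 : nat) (g : nat -> nat) : (M < K1)%N -> (M < K2)%N ->
  (forall i, (M < i)%N -> g i = 0%N) ->
  \sum_(0 <= i < K1) g i = \sum_(0 <= i < K2) g i.
Proof.
move=> h1 h2 g0; case: (leqP K1 K2) => h.
  by apply: sum_widen => // i hi; apply: g0; lia.
by symmetry; apply: sum_widen => [|i hi]; [apply: ltnW|apply: g0; lia].
Qed.

Lemma Od_Ev M K : (M.+1 < K)%N ->
  Od M.+1 K = Od M K + Ev M K /\ Ev M.+1 K = Ev M K + Od M K.
Proof.
move=> hK; split.
  rewrite /Od /Ev -big_split /=; apply: eq_bigr => i _; by rewrite binS.
case: K hK => // K hK.
rewrite /Ev /Od (big_nat_recl _ _ (fun i => 'C(M.+1, i.*2))) // (big_nat_recl _ _ (fun i => 'C(M, i.*2))) // bin0 /= bin0.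
have -> : \sum_(0 <= i < K) 'C(M.+1, i.+1.*2) =
          \sum_(0 <= i < K) 'C(M, i.+1.*2) + \sum_(0 <= i < K) 'C(M, i.*2.+1).
  by rewrite -big_split /=; apply: eq_bigr => i _; rewrite doubleS binS.
have -> : \sum_(0 <= i < K) 'C(M, i.*2.+1) = \sum_(0 <= i < K.+1) 'C(M, i.*2.+1).
  by apply: (@widen M) => [||i hi]; [lia|lia|rewrite bin_small //; lia].
lia.
Qed.

Lemma Od_Ev_val M K : (M.+1 < K)%N -> Od M.+1 K = 2 ^ M /\ Ev M.+1 K = 2 ^ M.
Proof.
elim: M K => [|M IH] K hK.
  case: K hK => // [[|K]] // _.
  by rewrite /Od /Ev !big_nat_recl //= !big1_seq // => i _; rewrite bin_small.
have [h1 h2] := Od_Ev hK. have [h3 h4] := IH K (ltnW hK).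
by rewrite h1 h2 h3 h4 expnS; split; lia.
Qed.

Lemma Oi_Ei M K : (M.+1 < K)%N ->
  Oi M.+1 K = Oi M K + Ei M K /\ Ei M.+1 K = Ei M K + Oi M K + Od M K.
Proof.
move=> hK; split.
  rewrite /Oi /Ei -big_split /=; apply: eq_bigr => i _; by rewrite binS mulnDr.
case: K hK => // K hK.
rewrite /Ei /Oi /Od (big_nat_recl _ _ (fun i => i * 'C(M.+1, i.*2))) // (big_nat_recl _ _ (fun i => i * 'C(M, i.*2))) // !mul0n !add0n.
have -> : \sum_(0 <= i < K) i.+1 * 'C(M.+1, i.+1.*2) =
          \sum_(0 <= i < K) i.+1 * 'C(M, i.+1.*2) + (\sum_(0 <= i < K) i * 'C(M, i.*2.+1)
             + \sum_(0 <= i < K) 'C(M, i.*2.+1)).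
  rewrite -!big_split /=; apply: eq_bigr => i _; rewrite doubleS binS; lia.
have E1 : \sum_(0 <= i < K) i * 'C(M, i.*2.+1) = \sum_(0 <= i < K.+1) i * 'C(M, i.*2.+1).
  by apply: (@widen M) => [||i hi]; [lia|lia|rewrite bin_small ?muln0 //; lia].
have E2 : \sum_(0 <= i < K) 'C(M, i.*2.+1) = \sum_(0 <= i < K.+1) 'C(M, i.*2.+1).
  by apply: (@widen M) => [||i hi]; [lia|lia|rewrite bin_small //; lia].
rewrite -E1 -E2; lia.
Qed.

Lemma Oi_Ei_val M K : (M.+2 < K)%N ->
  8 * Oi M.+2 K + 2 ^ M.+3 = M.+2 * 2 ^ M.+2 /\ 8 * Ei M.+2 K = M.+2 * 2 ^ M.+2.
Proof.
elim: M K => [|M IH] K hK.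
  case: K hK => // [[|[|K]]] // _.
  rewrite /Oi /Ei !big_nat_recl //= !big1_seq //= => i _; by rewrite bin_small ?muln0.
have [h1 h2] := Oi_Ei hK. have [h3 h4] := IH K (ltnW hK).
have [h5 _] := Od_Ev_val (M := M.+1) (ltnW hK).
rewrite h1 h2 h5; rewrite !expnS in h3 h4 *; split; lia.
Qed.

Definition Sn (n m : nat) : nat :=
  \sum_(1 <= i < (m.+1)./2.+1) i * 'C(n + m + 2, n + 2 * i + 1).

Lemma Sn_widen n m K : ((m.+1)./2 < K)%N ->
  Sn n m = \sum_(0 <= i < K) i * 'C(n + m + 2, n + 2 * i + 1).
Proof.
move=> hK; rewrite /Sn [RHS]big_ltn ?mul0n ?add0n; last lia.
apply: sum_widen => [|i hi]; first lia.
rewrite bin_small ?muln0 //; lia.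
Qed.

Lemma Sn_rec n m : Sn n.+1 m.+1 = Sn n m.+1 + Sn n.+1 m.
Proof.
rewrite !(@Sn_widen _ _ (m + 5)); try lia.
rewrite -big_split /=; apply: eq_bigr => i _.
have -> : (n.+1 + m.+1 + 2 = (n + m.+1 + 2).+1)%N by lia.
have -> : (n.+1 + 2 * i + 1 = (n + 2 * i + 1).+1)%N by lia.
rewrite binS mulnDr addnC; congr (_ + _); congr (_ * 'C(_, _)); lia.
Qed.

Lemma Sn0 m : 2 * Sn 0 m = m * 2 ^ m.
Proof.
rewrite (@Sn_widen _ _ (m + 5)); last lia.
have [h _] := @Oi_Ei_val m (m + 5) ltac:(lia).
have -> : \sum_(0 <= i < m + 5) i * 'C(0 + m + 2, 0 + 2 * i + 1) = Oi m.+2 (m + 5).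
  by apply: eq_bigr => i _; rewrite add0n mul2n addn1 addnC.
rewrite !expnS in h; lia.
Qed.

Lemma Snm0 n : Sn n 0 = 0%N.
Proof. by rewrite /Sn big_geq. Qed.

Local Open Scope ring_scope.

Lemma rf_sum (R : rcfType) n m :
  resistance_formula R n m = 2 * (n%:R - m%:R) + (2 : R) ^ (3 - (n : int) - (m : int)) * (Sn n m)%:R.
Proof. by rewrite /resistance_formula /Sn natr_sum. Qed.

Lemma rf_n0 (R : rcfType) n : resistance_formula R n 0 = 2 * n%:R.
Proof. by rewrite rf_sum Snm0 mulr0 addr0 subr0. Qed.

Lemma pow2_shift (R : rcfType) (z : int) (k : nat) :
  (2 : R) ^ z * 2 ^+ k = 2 ^ (z + (k : int)).
Proof. by rewrite expfzDr ?pnatr_eq0. Qed.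

Lemma rf_0m (R : rcfType) m : resistance_formula R 0 m = 2 * m%:R.
Proof.
rewrite rf_sum.
have h := Sn0 m.
have -> : (Sn 0 m)%:R = (m%:R * 2 ^+ m / 2 : R).
  apply: (@mulIf _ 2); first by rewrite pnatr_eq0.
  by rewrite mulfVK ?pnatr_eq0 // -natrX -natrM -natrM mulnC h.
have he := pow2_shift R (3 - (0%N : int) - (m : int)) m.
rewrite (_ : (3 - (0%N : int) - (m : int) + (m : int)) = 3) in he; last by lia.
set e := (2 : R) ^ _ in he *.
have -> : e * (m%:R * 2 ^+ m / 2) = m%:R * (e * 2 ^+ m) / 2 by ring.
by rewrite he -exprnP; field.
Qed.

Lemma rf_rec (R : rcfType) n m :
  resistance_formula R n.+1 m.+1 =
  (resistance_formula R n m.+1 + resistance_formula R n.+1 m) / 2.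
Proof.
rewrite !rf_sum Sn_rec natrD.
set z := (3 - (n.+1 : int) - (m.+1 : int)).
have -> : (3 - (n : int) - (m.+1 : int)) = z + (1%N : int) by rewrite /z; lia.
have -> : (3 - (n.+1 : int) - (m : int)) = z + (1%N : int) by rewrite /z; lia.
rewrite -!pow2_shift expr1 !mulrS.
by field.
Qed.

End Part1.
Import Part1.

Module Part2.
Local Open Scope ring_scope.

Section Abs.
Variables (R : rcfType) (p : nat).
Variable Adj : 'M[R]_p.
Variable rho : 'I_p.
Variable par : 'I_p -> 'I_p.
Variable D : 'I_p -> nat.
Hypothesis hAdj : forall x i, Adj x i = ((x != rho) && (i == par x))%:R.
Hypothesis par_rho : par rho = rho.
Hypothesis D_rho : D rho = 0%N.
Hypothesis D_par : forall x, x != rho -> D x = (D (par x)).+1.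

Local Notation L := (laplacian Adj).
Definition ev (x : 'I_p) : 'cV[R]_p := delta_mx x 0.
Definition sv x := ev x - ev rho.
Definition Bf (M : 'M[R]_p) (u v : 'cV[R]_p) : R := (u^T *m M *m v) 0 0.

Lemma deg_sum x : \sum_l Adj x l = (x != rho)%:R.
Proof.
case: (eqVneq x rho) => [->|hx] /=.
  by rewrite big1 // => l _; rewrite hAdj eqxx.
rewrite (bigD1 (par x)) //= big1 ?addr0; first by rewrite hAdj hx eqxx.
by move=> l hl; rewrite hAdj hx /= (negbTE hl).
Qed.

Lemma L_entry x i : L x i = ((x != rho) && (x == i))%:R - ((x != rho) && (i == par x))%:R.
Proof.
rewrite /laplacian !mxE deg_sum hAdj; congr (_ - _).
by case: (x != rho); case: (x == i).
Qed.

Lemma L_rho i : L rho i = 0.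
Proof. by rewrite L_entry eqxx /= subr0. Qed.

Lemma ev_entry x i z : ev x i z = (i == x)%:R.
Proof. by rewrite /ev mxE ord1 eqxx andbT. Qed.

Lemma LT_sv x : L^T *m sv x = sv x - sv (par x).
Proof.
apply/matrixP => i z; rewrite /sv mulmxBr /ev -!colE !mxE !deg_sum !hAdj ord1 eqxx /=.
rewrite !eqxx !andbT mul0rn subrr subr0.
case: (eqVneq x rho) => [->|hx] /=; first by rewrite par_rho; case: (rho == i); case: (i == rho) => /=; ring.
rewrite [x == i]eq_sym; case: (i == x); case: (i == par x); case: (i == rho) => /=; ring.
Qed.

Lemma Bf_subl M u1 u2 v : Bf M (u1 - u2) v = Bf M u1 v - Bf M u2 v.
Proof. by rewrite /Bf raddfB /= !mulmxBl !mxE. Qed.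
Lemma Bf_subr M u v1 v2 : Bf M u (v1 - v2) = Bf M u v1 - Bf M u v2.
Proof. by rewrite /Bf !mulmxBr !mxE. Qed.
Lemma Bf_ev M x y : Bf M (ev x) (ev y) = M x y.
Proof. by rewrite /Bf /ev trmx_delta -rowE -colE !mxE. Qed.
Lemma Bf_tr M u v : Bf M^T u v = Bf M v u.
Proof.
have h (A : 'M[R]_1) : A 0 0 = A^T 0 0 by rewrite mxE.
by rewrite /Bf h !trmx_mul !trmxK mulmxA.
Qed.
Lemma Bf_0l M v : Bf M 0 v = 0.
Proof. by rewrite /Bf trmx0 !mul0mx mxE. Qed.

Lemma D_par1 x : D (par x) = (D x).-1.
Proof.
case: (eqVneq x rho) => [->|hx]; first by rewrite par_rho D_rho.
by rewrite (D_par hx).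
Qed.

Lemma Diter x t : D (iter t par x) = (D x - t)%N.
Proof. elim: t => [|t IH]; first by rewrite subn0. by rewrite iterS D_par1 IH subnS. Qed.

Lemma D0 x : D x = 0%N -> x = rho.
Proof. by case: (eqVneq x rho) => // hx; rewrite (D_par hx). Qed.

Lemma iter_rho t : iter t par rho = rho.
Proof. by elim: t => // t IH; rewrite iterS IH par_rho. Qed.

Section Comb.
Variable G : 'I_p -> 'I_p -> R.
Hypothesis G_rhol : forall y, G rho y = 0.
Hypothesis G_rhor : forall x, G x rho = 0.

Lemma zero_ind :
  (forall x y, x != rho -> y != rho -> 2 * G x y = G (par x) y + G x (par y)) ->
  forall x y, G x y = 0.
Proof.
move=> hrec.
suff H : forall n x y, (D x + D y <= n)%N -> G x y = 0.
  by move=> x y; apply: (H _ x y (leqnn _)).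
elim=> [|n IH] x y hn.
  by rewrite (@D0 x) //; lia.
case: (eqVneq x rho) => [->|hx]; first exact: G_rhol.
case: (eqVneq y rho) => [->|hy]; first exact: G_rhor.
have h := hrec x y hx hy.
have hDx := D_par hx; have hDy := D_par hy.
rewrite (IH (par x) y) ?(IH x (par y)) ?addr0 in h; try lia.
by move: h => /eqP; rewrite mulf_eq0 pnatr_eq0 /= => /eqP.
Qed.

Hypothesis G_sym : forall x y, G x y = G y x.
Hypothesis G_rec : forall x y, x != rho -> y != rho ->
  2 * G x y = G (par x) y + G x (par y) + 2 * ((x == y)%:R + 1).

Lemma G_anc x t : G x (iter t par x) = 2 * (D (iter t par x))%:R.
Proof.
suff H : forall n x t, (D x + D (iter t par x) <= n)%N ->
  G x (iter t par x) = 2 * (D (iter t par x))%:R by apply: (H _ x t (leqnn _)).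
elim=> [|n IH] {}x {}t hn.
  have h0 : D (iter t par x) = 0%N by lia.
  by rewrite (D0 h0) G_rhor D_rho mulr0.
case: (eqVneq (iter t par x) rho) => [->|hy0]; first by rewrite G_rhor D_rho mulr0.
have hx : x != rho by apply: contraNneq hy0 => ->; rewrite iter_rho.
have hDx := D_par hx.
case: t hn hy0 => [|t] hn hy0.
  rewrite /= in hn *.
  have h := G_rec hx hx.
  have e1 : G x (par x) = 2 * (D (par x))%:R.
    by have := IH x 1%N; rewrite /= => ->//; lia.
  rewrite G_sym e1 eqxx in h.
  apply: (@mulfI _ 2); first by rewrite pnatr_eq0.
  rewrite h hDx -[(D (par x)).+1]addn1 natrD /=; ring.
have eyS : iter t.+1 par x = iter t par (par x) by rewrite iterSr.
set y := iter t.+1 par x in hn hy0 eyS *.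
have hy := hy0; have hDy := D_par hy.
have hDy' : D y = (D x - t.+1)%N by rewrite /y Diter.
have e1 : G (par x) y = 2 * (D y)%:R.
  rewrite eyS; apply: IH; rewrite Diter.
  move: hn; rewrite hDy' hDx; move: (D (par x)) => d; clear; lia.
have epy : par y = iter t.+2 par x by rewrite /y iterS.
have e2 : G x (par y) = 2 * (D (par y))%:R.
  rewrite epy; apply: IH; rewrite Diter.
  have h1 : (0 < D x - t.+1)%N by rewrite -hDy' hDy.
  move: hn h1; rewrite hDy' hDx; move: (D (par x)) => d; clear; lia.
have hxy : x != y.
  apply/eqP => exy; move: hDy'; rewrite -exy hDx; move: (D (par x)) => d; clear; lia.
clearbody y.
have h := G_rec hx hy; rewrite e1 e2 (negbTE hxy) in h.
apply: (@mulfI _ 2); first by rewrite pnatr_eq0.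
rewrite h hDy -[(D (par y)).+1]addn1 natrD /=; ring.
Qed.

Definition Rres x y := G x x + G y y - 2 * G x y.

Lemma Rres_sym x y : Rres x y = Rres y x.
Proof. rewrite /Rres G_sym; ring. Qed.

Lemma G_diag x : G x x = 2 * (D x)%:R.
Proof. exact: (G_anc x 0). Qed.

Lemma Rres_anc x t : Rres x (iter t par x) = 2 * ((D x)%:R - (D (iter t par x))%:R).
Proof. rewrite /Rres !G_diag G_anc; ring. Qed.

Lemma Rres_rec x y : x != y -> x != rho -> y != rho ->
  2 * Rres x y = Rres (par x) y + Rres x (par y).
Proof.
move=> hxy hx hy; rewrite /Rres !G_diag.
have h1 := G_rec hx hy; have h2 := G_rec hy hx.
rewrite (negbTE hxy) in h1; rewrite eq_sym (negbTE hxy) in h2.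
rewrite (G_sym y (par x)) (G_sym (par y) x) in h2.
rewrite (D_par hx) (D_par hy) -[(D (par x)).+1]addn1 -[(D (par y)).+1]addn1 !natrD /= in h1 *.
lra.
Qed.

Lemma Rres_path (a b : 'I_p) (n m : nat) :
  iter n par a = iter m par b -> (n <= D a)%N -> (m <= D b)%N ->
  (forall i l, (i < n)%N -> (l < m)%N -> iter i par a != iter l par b) ->
  Rres a b = resistance_formula R n m.
Proof.
move=> hc hna hmb hne.
suff H : forall u v, (u <= n)%N -> (v <= m)%N ->
  Rres (iter (n - u) par a) (iter (m - v) par b) = resistance_formula R u v.
  by have := H n m (leqnn _) (leqnn _); rewrite !subnn.
elim=> [|u IHu] v hu hv.
  rewrite subn0 rf_0m hc Rres_sym.
  have -> : iter m par b = iter v par (iter (m - v) par b) by rewrite -iterD subnKC.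
  rewrite Rres_anc !Diter; rewrite -natrB; last lia.
  by congr (_ * _%:R); lia.
elim: v hv => [|v IHv] hv.
  rewrite subn0 rf_n0 -hc.
  have -> : iter n par a = iter u.+1 par (iter (n - u.+1) par a) by rewrite -iterD subnKC.
  rewrite Rres_anc !Diter; rewrite -natrB; last lia.
  by congr (_ * _%:R); lia.
set x := iter (n - u.+1) par a; set y := iter (m - v.+1) par b.
have hx : x != rho by apply/eqP => e; have := Diter a (n - u.+1); rewrite -/x e D_rho; lia.
have hy : y != rho by apply/eqP => e; have := Diter b (m - v.+1); rewrite -/y e D_rho; lia.
have hxy : x != y by apply: hne; lia.
apply: (@mulfI _ 2); first by rewrite pnatr_eq0.
rewrite Rres_rec // rf_rec mulrC divfK ?pnatr_eq0 //.
have -> : par x = iter (n - u) par a.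
  by rewrite /x -iterS; have -> : (n - u = (n - u.+1).+1)%N by lia.
have -> : par y = iter (m - v) par b.
  by rewrite /y -iterS; have -> : (m - v = (m - v.+1).+1)%N by lia.
rewrite IHu ?IHv //; lia.
Qed.
End Comb.

Lemma Bf_0r M u : Bf M u 0 = 0.
Proof. by rewrite /Bf !mulmx0 mxE. Qed.

Lemma sv_rho : sv rho = 0.
Proof. by rewrite /sv subrr. Qed.

Lemma const_sv x : (const_mx 1 : 'M[R]_p) *m sv x = 0.
Proof.
apply/matrixP => i z; rewrite /sv mulmxBr /ev -!colE !mxE.
by rewrite subrr.
Qed.

Lemma ss_val x y : x != rho -> y != rho -> Bf 1%:M (sv x) (sv y) = (x == y)%:R + 1.
Proof.
move=> hx hy; rewrite /sv !(Bf_subl, Bf_subr) !Bf_ev !mxE.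
rewrite eqxx (negbTE hx) [rho == y]eq_sym (negbTE hy) /=.
by case: (x == y) => /=; ring.
Qed.

Section Lyap.
Variables (Q : 'M[R]_(p.-1, p)) (Sig : 'M[R]_(p.-1)).
Hypothesis hQTQ : Q^T *m Q = 1%:M - (p%:R)^-1 *: const_mx 1.
Hypothesis hlyap : (Q *m L *m Q^T) *m Sig + Sig *m (Q *m L *m Q^T)^T = 1%:M.

Lemma P_sv x : Q^T *m (Q *m sv x) = sv x.
Proof. by rewrite mulmxA hQTQ mulmxBl mul1mx -scalemxAl const_sv scaler0 subr0. Qed.

Lemma P_svT x : (sv x)^T *m Q^T *m Q = (sv x)^T.
Proof.
by rewrite -[RHS](congr1 trmx (P_sv x)) !trmx_mul trmxK.
Qed.

Lemma key_lyap x y :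
  Bf (2 *: (Q^T *m Sig *m Q)) (sv x - sv (par x)) (sv y) +
  Bf (2 *: (Q^T *m Sig *m Q)) (sv x) (sv y - sv (par y)) = 2 * Bf 1%:M (sv x) (sv y).
Proof.
rewrite -!LT_sv /Bf.
have E := congr1 (fun M => (sv x)^T *m (Q^T *m M *m Q) *m sv y) hlyap.
rewrite /= mulmxDr mulmxDl mulmxDr mulmxDl mulmx1 in E.
have T1 : (sv x)^T *m (Q^T *m (Q *m L *m Q^T *m Sig) *m Q) *m sv y =
          (sv x)^T *m L *m (Q^T *m Sig *m Q) *m sv y.
  by rewrite !mulmxA P_svT.
have T2 : (sv x)^T *m (Q^T *m (Sig *m (Q *m L *m Q^T)^T) *m Q) *m sv y =
          (sv x)^T *m (Q^T *m Sig *m Q) *m L^T *m sv y.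
  rewrite !trmx_mul trmxK !mulmxA -[_ *m Q *m sv y]mulmxA -[_ *m Q^T *m (Q *m sv y)]mulmxA P_sv.
  by [].  
have T3 : (sv x)^T *m (Q^T *m Q) *m sv y = (sv x)^T *m sv y by rewrite mulmxA P_svT.
rewrite T1 T2 T3 in E.
have scE (c : R) (A : 'M[R]_1) : (c *: A) 0 0 = c * A 0 0 by rewrite mxE.
have adE (A B : 'M[R]_1) : (A + B) 0 0 = A 0 0 + B 0 0 by rewrite mxE.
rewrite !trmx_mul trmxK -!scalemxAr -!scalemxAl !scE mulmx1 -mulrDr.
congr (_ * _).
by rewrite -E adE !mulmxA.
Qed.
End Lyap.

Lemma G_ent (M : 'M[R]_p) x y :
  Bf M (sv x) (sv y) = M x y - M x rho - M rho y + M rho rho.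
Proof. rewrite /sv !(Bf_subl, Bf_subr) !Bf_ev; ring. Qed.

Lemma abs_main (a b : 'I_p) n m :
  iter n par a = iter m par b -> (n <= D a)%N -> (m <= D b)%N ->
  (forall i l, (i < n)%N -> (l < m)%N -> iter i par a != iter l par b) ->
  resistance_is Adj a b (resistance_formula R n m).
Proof.
move=> hc hna hmb hne Q Sig hQ1 hQQ hQTQ hlyap X.
have key := key_lyap hQTQ hlyap; rewrite -/X in key.
pose G x y := Bf X (sv x) (sv y).
have G_l y : G rho y = 0 by rewrite /G sv_rho Bf_0l.
have G_r x : G x rho = 0 by rewrite /G sv_rho Bf_0r.
have keyG x y : x != rho -> y != rho ->
    (G x y - G (par x) y) + (G x y - G x (par y)) = 2 * ((x == y)%:R + 1).
  move=> hx hy; rewrite -(ss_val hx hy) -key /G.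
  by rewrite (Bf_subl X (sv x) (sv (par x))) (Bf_subr X (sv x) (sv y) (sv (par y))).
have Gsym : forall x y, G x y = G y x.
  move=> x y; apply/eqP; rewrite -subr_eq0; apply/eqP.
  pose H x y := G x y - G y x.
  have := @zero_ind H; apply.
  - by move=> z; rewrite /H G_l G_r subrr.
  - by move=> z; rewrite /H G_l G_r subrr.
  move=> x' y' hx hy; rewrite /H.
  have h1 := keyG x' y' hx hy; have h2 := keyG y' x' hy hx.
  rewrite eq_sym in h2; lra.
have Grec x y : x != rho -> y != rho ->
    2 * G x y = G (par x) y + G x (par y) + 2 * ((x == y)%:R + 1).
  move=> hx hy; have := keyG x y hx hy; lra.
have hR := Rres_path G_r Gsym Grec hc hna hmb hne.
have rowS x : \sum_y X x y = 0.
  have : X *m (const_mx 1 : 'cV[R]_p) = 0.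
    by rewrite /X -scalemxAl -!mulmxA hQ1 !mulmx0 scaler0.
  move/matrixP => /(_ x 0); rewrite !mxE => h; rewrite -[RHS]h.
  by apply: eq_bigr => y _; rewrite [const_mx 1 y 0]mxE mulr1.
have colS x : \sum_y X y x = 0.
  have : (const_mx 1 : 'rV[R]_p) *m X = 0.
    have h1 : (const_mx 1 : 'rV[R]_p) *m Q^T = 0.
      have -> : (const_mx 1 : 'rV[R]_p) = (const_mx 1 : 'cV[R]_p)^T by rewrite trmx_const.
      by rewrite -trmx_mul hQ1 trmx0.
    by rewrite /X -scalemxAr !mulmxA h1 !mul0mx scaler0.
  move/matrixP => /(_ 0 x); rewrite !mxE => h; rewrite -[RHS]h.
  by apply: eq_bigr => y _; rewrite [const_mx 1 0 y]mxE mul1r.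
have p0 : (0 < p)%N by case: rho => i hi; apply: leq_ltn_trans hi.
have Xsym x : X x rho = X rho x.
  have : \sum_y (G x y - G y x) = 0 by rewrite big1 // => y _; rewrite Gsym subrr.
  rewrite /G; under eq_bigr do rewrite !G_ent.
  have e i : X x i - X x rho - X rho i + X rho rho -
      (X i x - X i rho - X rho x + X rho rho) =
      ((X x i - X rho i) - (X i x - X i rho)) + (X rho x - X x rho) by ring.
  under eq_bigr do rewrite e.
  rewrite big_split /= !sumrB rowS colS (rowS rho) (colS rho) !subrr add0r sumr_const card_ord.
  move=> h; apply/eqP; rewrite eq_sym -subr_eq0; apply/eqP.
  have hp : (p%:R : R) != 0 by rewrite pnatr_eq0 -lt0n.
  apply: (mulIf hp); rewrite mul0r -h mulr_natr //.
  by rewrite sumr_const card_ord mulrnBl.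
rewrite -hR /Rres /G !G_ent.
have := Xsym a; have := Xsym b; lra.
Qed.
End Abs.

End Part2.
Import Part2.

Module Part3.

Lemma pbE (P : Prop) : pb P <-> P.
Proof. by rewrite /pb; case: excluded_middle_informative. Qed.

Lemma zip_path (T : eqType) (e : rel T) x s :
  (forall a b, (a, b) \in zip (x :: s) s -> e a b) -> path e x s.
Proof.
elim: s x => // y s IH x h /=; apply/andP; split.
  by apply: h; rewrite /= inE eqxx.
by apply: IH => a b hab; apply: h; rewrite /= inE hab orbT.
Qed.

Section Graph.
Variables (R : rcfType) (N : nat) (A : 'M[R]_N) (k j : 'I_N) (n m : nat).
Local Notation S := (conn_nodes A k j).
Local Notation E := (conn_rel A k j).
Hypothesis hES : forall a b, E a b -> (a \in S) && (b \in S).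
Variable r : 'I_N.
Hypothesis rS : r \in S.
Hypothesis hr0 : #|[set b | E r b]| = 0%N.
Hypothesis hv1 : forall v, v \in S -> v != r -> #|[set b | E v b]| = 1%N.
Hypothesis hconn : forall v, v \in S -> connect E v r.
Hypothesis hE1 : forall a b, E a b -> A a b = 1%R.
Hypothesis hk : shortest_to_common A k j k n.
Hypothesis hj : shortest_to_common A k j j m.
Hypothesis kS : k \in S.
Hypothesis jS : j \in S.

Definition parN v := odflt r [pick b | E v b].

Lemma noE_r b : ~~ E r b.
Proof.
apply/negP => h; have := cards0_eq hr0; move/setP/(_ b).
by rewrite inE h inE.
Qed.

Lemma parN_r : parN r = r.
Proof. by rewrite /parN; case: pickP => // b h; have := noE_r b; rewrite h. Qed.

Lemma E_par a b : E a b -> b = parN a /\ a != r.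
Proof.
move=> h; have /andP[aS _] := hES h.
have ar : a != r by apply: contraTneq h => ->; apply: noE_r.
split=> //; rewrite /parN; case: pickP => [b' hb'|/(_ b)]; last by rewrite h.
have /cards1P [c hc] : #|[set b | E a b]| == 1%N by rewrite hv1.
have : b \in [set b | E a b] by rewrite inE.
have : b' \in [set b | E a b] by rewrite inE.
by rewrite hc !inE => /eqP -> /eqP ->.
Qed.

Lemma par_E v : v \in S -> v != r -> E v (parN v).
Proof.
move=> vS vr; rewrite /parN; case: pickP => // /= h0.
have := hv1 vS vr; rewrite (_ : [set b | E v b] = set0) ?cards0 //.
by apply/setP => b; rewrite !inE h0.
Qed.

Lemma parN_S v : v \in S -> parN v \in S.
Proof.
move=> vS; case: (eqVneq v r) => [->|vr]; first by rewrite parN_r.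
by have /andP[] := hES (par_E vS vr).
Qed.

Lemma iter_S t v : v \in S -> iter t parN v \in S.
Proof. by move=> vS; elim: t => // t IH; rewrite iterS parN_S. Qed.

Lemma iter_r t : iter t parN r = r.
Proof. by elim: t => // t IH; rewrite iterS IH parN_r. Qed.

Lemma pathE_iter v s : path E v s -> last v s = iter (size s) parN v.
Proof.
elim: s v => // y s IH v /= /andP[hvy hp].
have [ey _] := E_par hvy; subst y.
by rewrite -iterS iterSr IH.
Qed.

Lemma reach_r v : v \in S -> exists t, iter t parN v == r.
Proof.
move=> vS; have /connectP [s hs hl] := hconn vS.
by exists (size s); rewrite -pathE_iter // -hl.
Qed.

Definition DN v : nat :=
  match excluded_middle_informative (exists t, iter t parN v == r) with
  | left h => ex_minn h
  | right _ => 0%N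
  end.

Lemma DN_spec v : v \in S ->
  iter (DN v) parN v = r /\ forall t, iter t parN v = r -> (DN v <= t)%N.
Proof.
move=> vS; rewrite /DN; case: excluded_middle_informative => [h|h]; last first.
  by case: h; apply: reach_r.
case: ex_minnP => t /eqP ht hmin; split=> // t' ht'; apply: hmin; exact/eqP.
Qed.

Lemma DN_r : DN r = 0%N.
Proof. by have [_ h] := DN_spec rS; have := h 0%N erefl; lia. Qed.

Lemma DN0 v : v \in S -> DN v = 0%N -> v = r.
Proof. by move=> vS h; have [h1 _] := DN_spec vS; rewrite h in h1. Qed.

Lemma DN_par v : v \in S -> v != r -> DN v = (DN (parN v)).+1.
Proof.
move=> vS vr; have pS := parN_S vS.
have [h1 h2] := DN_spec vS; have [h3 h4] := DN_spec pS.
have a1 : (DN v <= (DN (parN v)).+1)%N by apply: h2; rewrite iterSr.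
have a2 : DN v != 0%N by apply: contra_neq vr; apply: DN0.
have a3 : (DN (parN v) <= (DN v).-1)%N.
  apply: h4; rewrite -iterSr prednK ?lt0n //.
lia.
Qed.

Lemma DN_iter v t : v \in S -> DN (iter t parN v) = (DN v - t)%N.
Proof.
move=> vS; elim: t => [|t IH]; first by rewrite subn0.
rewrite iterS; have itS := iter_S t vS.
case: (eqVneq (iter t parN v) r) => [e|ne].
  by rewrite e parN_r DN_r; rewrite e DN_r in IH; lia.
by rewrite (DN_par itS ne) in IH; lia.
Qed.

Lemma edgeA a b : E a b -> edge A a b.
Proof. by move=> h; rewrite /edge hE1 // ltr01. Qed.

Lemma path_tree v t : v \in S -> (t <= DN v)%N ->
  exists s, [/\ path (edge A) v s, size s = t & last v s = iter t parN v].
Proof.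
elim: t v => [|t IH] v vS ht; first by exists [::].
have vr : v != r by apply: contraTneq ht => ->; rewrite DN_r.
have hD := DN_par vS vr.
have [s [h1 h2 h3]] := IH (parN v) (parN_S vS) ltac:(lia).
exists (parN v :: s); split => //=; first by rewrite edgeA ?par_E.
by rewrite h2.
by rewrite h3 -iterS iterSr.
Qed.

Lemma common_r : common_reach A k j r.
Proof.
apply/andP; split.
  by have [s [h1 _ h3]] := path_tree kS (leqnn _); apply/connectP; exists s;
    rewrite // h3; case: (DN_spec kS).
by have [s [h1 _ h3]] := path_tree jS (leqnn _); apply/connectP; exists s;
  rewrite // h3; case: (DN_spec jS).
Qed.

Lemma Min src d : src \in S -> shortest_to_common A k j src d ->
  (d <= DN src)%N /\ forall l, (l < d)%N -> ~~ common_reach A k j (iter l parN src).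
Proof.
move=> sS [_ hmin].
have M1 : (d <= DN src)%N.
  have [s [h1 h2 h3]] := path_tree sS (leqnn _).
  rewrite -h2; apply: hmin => //; rewrite h3; case: (DN_spec sS) => -> _.
  exact: common_r.
split=> // l hl; apply/negP => hc.
have [s [h1 h2 h3]] := path_tree sS (ltnW (leq_trans hl M1)).
have := hmin s h1; rewrite h3 => /(_ hc); lia.
Qed.

Lemma conn_tree p1 p2 : is_connection A k j p1 p2 -> path E k p1 /\ path E j p2.
Proof.
move=> hc; split; apply: zip_path => a b hab; apply/pbE; exists p1, p2.
  by rewrite hc hab.
by rewrite hc hab orbT.
Qed.

Lemma Ex src other d : src \in S -> (src == k) && (other == j) || (src == j) && (other == k) ->
  shortest_to_common A k j src d ->
  common_reach A k j (iter d parN src) /\ exists t, iter d parN src = iter t parN other.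
Proof.
move=> sS hso hsh; have [[p /and3P[hp hc /eqP hsz]] hmin] := hsh.
move: hc; case: (shortenP hp) => p' hp' hu hsub hc.
have hsz' : size p' = d.
  apply/eqP; rewrite eqn_leq; apply/andP; split.
    by rewrite -hsz; apply: uniq_leq_size => //; case/andP: hu.
  by apply: hmin.
have cw : connect (edge A) other (last src p').
  by case/orP: hso => /andP[/eqP es /eqP eo]; subst; case/andP: hc => ? ?.
case/connectP: cw => q hq.
case: (shortenP hq) => q' hq' huq _ hlq.
suff [e1 e2] : last src p' = iter d parN src /\ last other q' = iter (size q') parN other.
  split; first by rewrite -e1.
  by exists (size q'); rewrite -e1 -e2 hlq.
case/orP: hso => /andP[/eqP es /eqP eo]; subst src other.
  have hcon : is_connection A k j p' q' by rewrite /is_connection hp' hq' hu huq -hlq eqxx.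
  have [c1 c2] := conn_tree hcon.
  by rewrite !pathE_iter // hsz'.
have hcon : is_connection A k j q' p' by rewrite /is_connection hp' hq' hu huq -hlq eqxx.
have [c1 c2] := conn_tree hcon.
by rewrite !pathE_iter // hsz'.
Qed.

Lemma meet : [/\ iter n parN k = iter m parN j, (n <= DN k)%N, (m <= DN j)%N &
  forall i l, (i < n)%N -> (l < m)%N -> iter i parN k != iter l parN j].
Proof.
have [M1k M2k] := Min kS hk; have [M1j M2j] := Min jS hj.
have [ck [t1 e1]] : common_reach A k j (iter n parN k) /\ exists t, iter n parN k = iter t parN j.
  by apply: Ex => //; rewrite !eqxx.
have [cj [t2 e2]] : common_reach A k j (iter m parN j) /\ exists t, iter m parN j = iter t parN k.
  by apply: Ex => //; rewrite !eqxx orbT.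
have ht1 : (m <= t1)%N by rewrite leqNgt; apply/negP => h; have := M2j _ h; rewrite -e1 ck.
have ht2 : (n <= t2)%N by rewrite leqNgt; apply/negP => h; have := M2k _ h; rewrite -e2 cj.
have d1 := congr1 DN e1; have d2 := congr1 DN e2.
rewrite !DN_iter // in d1 d2.
have kk := iter_S n kS; have jj := iter_S m jS.
split=> //.
  case: (posnP (DN k - n)) => hz.
    rewrite (DN0 kk) ?DN_iter //; rewrite (DN0 jj) ?DN_iter //; lia.
  have -> : m = t1 by lia.
  exact: e1.
move=> i l hi hl; apply/negP => /eqP e.
have := M2k _ hi; rewrite /common_reach; apply/negP; rewrite negbK; apply/andP; split.
  have [s [h1 _ h3]] := path_tree kS (ltnW (leq_trans hi M1k)).
  by apply/connectP; exists s.
rewrite e.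
have [s [h1 _ h3]] := path_tree jS (ltnW (leq_trans hl M1j)).
by apply/connectP; exists s.
Qed.


Lemma final (a b : 'I_#|S|) : enum_val a = k -> enum_val b = j ->
  resistance_is (subadj A S E) a b (resistance_formula R n m).
Proof.
move=> ha hb.
pose parP (x : 'I_#|S|) := enum_rank_in rS (parN (enum_val x)).
pose rhoP := enum_rank_in rS r.
pose DP (x : 'I_#|S|) := DN (enum_val x).
have evS (x : 'I_#|S|) : enum_val x \in S := enum_valP x.
have ev_par x : enum_val (parP x) = parN (enum_val x) by rewrite enum_rankK_in // parN_S.
have ev_rho : enum_val rhoP = r by rewrite enum_rankK_in.
have ev_iter t x : enum_val (iter t parP x) = iter t parN (enum_val x).
  by elim: t => // t IH; rewrite !iterS ev_par IH.
have rhoE x : (x == rhoP) = (enum_val x == r).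
  apply/eqP/eqP => [->//|e]; by rewrite -(enum_valK_in rS x) e.
have [hc hna hmb hne] := meet.
apply: (@abs_main R #|S| (subadj A S E) rhoP parP DP).
- move=> x i; rewrite /subadj mxE.
  case hE: (E (enum_val x) (enum_val i)).
    rewrite hE1 //; have [e1 e2] := E_par hE.
    rewrite rhoE e2 /=; suff -> : i == parP x by [].
    by apply/eqP; apply: enum_val_inj; rewrite ev_par -e1.
  case: (eqVneq x rhoP) => //= hx; case: (eqVneq i (parP x)) => //= ei.
  have := par_E (evS x); rewrite -rhoE => /(_ hx).
  by rewrite -ev_par -ei hE.
- by apply: enum_val_inj; rewrite ev_par ev_rho parN_r.
- by rewrite /DP ev_rho DN_r.
- by move=> x hx; rewrite /DP ev_par; apply: DN_par => //; rewrite -rhoE.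
- by apply: enum_val_inj; rewrite !ev_iter ha hb.
- by rewrite /DP ha.
- by rewrite /DP hb.
- by move=> i l hi hl; rewrite -(inj_eq enum_val_inj) !ev_iter ha hb hne.
Qed.

End Graph.

End Part3.
Import Part3.

Local Open Scope ring_scope.

Theorem theorem3 (R : rcfType) (N : nat) (A : 'M[R]_N) (k j : 'I_N) (n m : nat) :
  (forall a b, 0 <= A a b) ->
  k != j ->
  directed_tree (conn_nodes A k j) (conn_rel A k j) ->
  (forall a b, conn_rel A k j a b -> A a b = 1) ->
  shortest_to_common A k j k n ->
  shortest_to_common A k j j m ->
  forall a b : 'I_#|conn_nodes A k j|,
    enum_val a = k -> enum_val b = j ->
    resistance_is (subadj A (conn_nodes A k j) (conn_rel A k j)) a b
      (resistance_formula R n m).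
Proof.
move=> hA hkj [hES [r rS [hr0 hv1 hconn]]] hE1 hk hj a b ha hb.
have kS : k \in conn_nodes A k j by have := enum_valP a; rewrite ha.
have jS : j \in conn_nodes A k j by have := enum_valP b; rewrite hb.
by apply: (final hES rS hr0 hv1 hconn hE1 hk hj kS jS).
Qed.
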